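(* Let $r:s_1\ldots s_n\to\mathsf{Fact}$ be a fact constructor, let $Q$ be a query, and let $\vec x=x_1,\dots,x_n$ be distinct variables with $x_i$ of sort $s_i$ and $\{\vec x\}\cap\mathrm{Var}(Q)=\emptyset$. Then there exists a condition $\varphi^{\vec x\mid r}_Q$ such that for all ground finite multisets of facts $F$ and all ground substitutions $\sigma=\{\vec t/\vec x,\vec a/\vec v\}$ for which $\{\vec a/\vec v\}(Q)$ is closed, the condition $\sigma(\varphi^{\vec x\mid r}_Q)$ is closed, and $\mathrm{Init}_{\sigma(\varphi^{\vec x\mid r}_Q)}(F)\to^!\mathrm{Sat}(\mathsf{true})$ iff there is $F'$ with $\mathrm{Init}_{\{\vec a/\vec v\}(Q)}(F)\to^!\mathrm{Ans}(F'\circ r(\vec t))$, and $\mathrm{Init}_{\sigma(\varphi^{\vec x\mid r}_Q)}(F)\to^!\mathrm{Sat}(\mathsf{false})$ iff there is $F'$ with $r(\vec t)\notin F'$ and $\mathrm{Init}_{\{\vec a/\vec v\}(Q)}(F)\to^!\mathrm{Ans}(F')$. Moreover, if $Q$ is deterministic, then so is $\varphi^{\vec x\mid r}_Q$.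
   Context: Setting. Fix an order-sorted signature $\Sigma$ with sorts $\mathsf{Fact}$, $\mathsf{Bool}$ and a $\Sigma$-algebra of facts $\mathcal{D}$ presented by structural axioms $A$ and confluent terminating equations, providing Boolean connectives and Boolean-valued equality on every sort; every ground $\mathsf{Bool}$ term reduces to $\mathsf{true}$ or $\mathsf{false}$. Multisets of facts: associative commutative $\circ$ with identity $\emptyset$. A terminating and preserving pattern $P$ is $[F_1]_!\circ[F_2]_?$ or $[F_2]_?$ ($F_1,F_2$ non-empty, possibly non-ground, multisets of facts); $P_!,P_?$ are the wrapped multisets ($P_!=\emptyset$ if absent). Conditions: $\mathrm{False}$, $\{B\}$, $\neg\psi$, $\psi_1\vee\psi_2$, $\exists P.\psi$ (binding in $\psi$ the variables of $P$ not bound by the context). Condition-evaluation stacks consist of frames $\mathrm{Res}(B)$, $\mathrm{Not}$, $[\vec a]^{\vec v}_\psi$, $[\vec a]^{\vec v,\downarrow}_\psi$, $[F'\mid\vec a]^{\vec v}_{\exists P.\psi}$ ($\sigma=\{\vec a/\vec v\}$); rules (''$X\mapsto Y$'' meaning $\{F,S\,X\}^c\to\{F,S\,Y\}^c$, $F$ the database): $[\vec a]_{\mathrm{False}}\mapsto\mathrm{Res}(\mathsf{false})$; $[\vec a]_{\{B\}}\mapsto\mathrm{Res}(\sigma(B))$; $[\vec a]_{\neg\psi}\mapsto\mathrm{Not}[\vec a]_\psi$; $\mathrm{Not}\,\mathrm{Res}(B)\mapsto\mathrm{Res}(\neg B)$; $[\vec a]_{\psi_1\vee\psi_2}\mapsto[\vec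 a]^\downarrow_{\psi_1}[\vec a]_{\psi_2}$; $[\vec a]^\downarrow_\psi\mathrm{Res}(\mathsf{true})\mapsto\mathrm{Res}(\mathsf{true})$; $[\vec a]^\downarrow_\psi\mathrm{Res}(\mathsf{false})\mapsto[\vec a]_\psi$; $[\vec a]_{\exists P.\psi}\mapsto[F\mid\vec a]_{\exists P.\psi}$; if $\vec w$ lists the variables of $P$ not in $\vec v$, $\sigma'=\{\vec a/\vec v,\vec b/\vec w\}$, $F'=F''\circ\sigma'(P_!\circ P_?)$: $[F'\mid\vec a]_{\exists P.\psi}\mapsto[F''\circ\sigma'(P_!)\mid\vec a]_{\exists P.\psi}[\vec a,\vec b]^{\vec v,\vec w}_\psi$; $[F'\mid\vec a]_{\exists P.\psi}\mathrm{Res}(\mathsf{false})\mapsto[F'\mid\vec a]_{\exists P.\psi}$; $[F'\mid\vec a]_{\exists P.\psi}\mathrm{Res}(\mathsf{true})\mapsto\mathrm{Res}(\mathsf{true})$; if no matching exists, $[F'\mid\vec a]_{\exists P.\psi}\mapsto\mathrm{Res}(\mathsf{false})$; finally $\{F,\mathrm{Res}(B)\}^c\to\mathrm{Sat}(B)$. $\mathrm{Init}_\varphi(F):=\{F,[\,]_\varphi\}^c$. Queries: $\emptyset$; facts $f$; $Q_1\oplus Q_2$; $\varphi\Rightarrow Q$; $\mathrm{From}\,P.Q$ ($P$ terminating and preserving, binding like $\exists$). Query system: states $\{F,F',S\}^q$, terminal $\mathrm{Ans}(F')$; with ''$X\mapsto Y$'' meaning $\{F,F',S\,X\}^q\to\{F,F',S\,Y\}^q$: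 $\{F,F',S[\vec a]_f\}^q\to\{F,F'\circ\sigma(f),S\}^q$; $[\vec a]_\emptyset\mapsto$ (nothing); $[\vec a]_{R_1\oplus R_2}\mapsto[\vec a]_{R_2}[\vec a]_{R_1}$; $[\vec a]_{\varphi\Rightarrow R}\mapsto[\vec a\mid[\vec a]^{\vec v}_\varphi]_R$; $[\vec a\mid\mathrm{Res}(\mathsf{false})]_R\mapsto$ (nothing); $[\vec a\mid\mathrm{Res}(\mathsf{true})]_R\mapsto[\vec a]_R$; for each condition rule $\{F,S'\}^c\to\{F,S''\}^c$, $[\vec a\mid S']_R\mapsto[\vec a\mid S'']_R$; $[\vec a]_{\mathrm{From}\,P.R}\mapsto[F\mid\vec a]_{\mathrm{From}\,P.R}$; if $F''=H\circ\sigma'(P_!\circ P_?)$ then $[F''\mid\vec a]_{\mathrm{From}\,P.R}\mapsto[H\circ\sigma'(P_!)\mid\vec a]_{\mathrm{From}\,P.R}[\vec a,\vec b]^{\vec v,\vec w}_R$; if no matching exists, $[F''\mid\vec a]_{\mathrm{From}\,P.R}\mapsto$ (nothing); $\{F,F',\text{empty}\}^q\to\mathrm{Ans}(F')$. $\mathrm{Init}_Q(F):=\{F,\emptyset,[\,]_Q\}^q$. $t\to^!t'$ means $t\to^*t'$ with $t'$ irreducible. $\mathrm{Var}(t)$ is the set of variables of $t$; a condition/query is closed if all its variables are bound by enclosing patterns. A fully reduced fact term $t$ has the unique matching property if for every ground fully reduced fact $t'$ there is at most one substitution $\sigma$ with $\sigma(t)=t'$; a condition or query is deterministic if all its quantification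 patterns (including those inside conditions) consist of a single fact with the unique matching property. *)

(* Defs.v *)
From mathcomp Require Import all_boot.
Set Implicit Arguments. Unset Strict Implicit. Unset Printing Implicit Defensive.

(* Each (possibly overloaded) operator instance is a separate symbol. *)
Record sig := Sig {
  srt : eqType;
  sFact : srt;
  sBool : srt;
  leS : rel srt;
  var : eqType;
  vsort : var -> srt;
  opsym : eqType;
  fdom : opsym -> seq srt;
  fcod : opsym -> srt;
  fTrue : opsym; fFalse : opsym; fNot : opsym; fAnd : opsym; fOr : opsym;
  fEq : srt -> opsym
}.

Section Syntax.
Variable S : sig.

Inductive term : Type :=
| TVar of var S
| TApp of opsym S & seq term.

Definition bTrue : term := TApp (fTrue S) [::].
Definition bFalse : term := TApp (fFalse S) [::].

Fixpoint tvars (t : term) : seq (var S) :=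
  match t with
  | TVar x => [:: x]
  | TApp _ ts => (fix go ts := match ts with
                   | [::] => [::] | u :: us => tvars u ++ go us end) ts
  end.

Definition ground (t : term) : Prop := tvars t = [::].
Definition gr_list (ts : seq term) : Prop := foldr (fun t P => ground t /\ P) True ts.

Fixpoint substF (s : var S -> term) (t : term) : term :=
  match t with
  | TVar x => s x
  | TApp f ts => TApp f ((fix go ts := match ts with
                   | [::] => [::] | u :: us => substF s u :: go us end) ts)
  end.

Definition env := seq (var S * term).

Fixpoint lookup (e : env) (x : var S) : option term :=
  match e with
  | [::] => None
  | (y, t) :: e' => if y == x then Some t else lookup e' x
  end.

Definition substL (e : env) : term -> term :=
  substF (fun x => odflt (TVar x) (lookup e x)).

Inductive wt : term -> srt S -> Prop :=
| wt_var x s : leS (vsort x) s -> wt (TVar x) s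
| wt_app f ts s : wts ts (fdom f) -> leS (fcod f) s -> wt (TApp f ts) s
with wts : seq term -> seq (srt S) -> Prop :=
| wts_nil : wts [::] [::]
| wts_cons t ts s ss : wt t s -> wts ts ss -> wts (t :: ts) (s :: ss).

Fixpoint rel2 (R : term -> term -> Prop) (ts us : seq term) : Prop :=
  match ts, us with
  | [::], [::] => True
  | t :: ts', u :: us' => R t u /\ rel2 R ts' us'
  | _, _ => False
  end.

(* Patterns [F1]_! o [F2]_?  (pbang = F1, empty if absent; pq = F2). *)
Record pat := Pat { pbang : seq term; pq : seq term }.

Definition patvars (P : pat) : seq (var S) :=
  flatten (map tvars (pbang P ++ pq P)).

Definition substP (e : env) (P : pat) : pat :=
  Pat (map (substL e) (pbang P)) (map (substL e) (pq P)).

Inductive cond : Type :=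
| CFalse
| CB of term
| CNot of cond
| COr of cond & cond
| CEx of pat & cond.

Inductive query : Type :=
| QEmpty
| QFact of term
| QPlus of query & query
| QImp of cond & query
| QFrom of pat & query.

Fixpoint cvars (c : cond) : seq (var S) :=
  match c with
  | CFalse => [::]
  | CB B => tvars B
  | CNot c1 => cvars c1
  | COr c1 c2 => cvars c1 ++ cvars c2
  | CEx P c1 => patvars P ++ cvars c1
  end.

Fixpoint qvars (q : query) : seq (var S) :=
  match q with
  | QEmpty => [::]
  | QFact f => tvars f
  | QPlus q1 q2 => qvars q1 ++ qvars q2
  | QImp c q1 => cvars c ++ qvars q1
  | QFrom P q1 => patvars P ++ qvars q1
  end.

Fixpoint substC (e : env) (c : cond) : cond :=
  match c with
  | CFalse => CFalse
  | CB B => CB (substL e B)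
  | CNot c1 => CNot (substC e c1)
  | COr c1 c2 => COr (substC e c1) (substC e c2)
  | CEx P c1 => CEx (substP e P) (substC e c1)
  end.

Fixpoint substQ (e : env) (q : query) : query :=
  match q with
  | QEmpty => QEmpty
  | QFact f => QFact (substL e f)
  | QPlus q1 q2 => QPlus (substQ e q1) (substQ e q2)
  | QImp c q1 => QImp (substC e c) (substQ e q1)
  | QFrom P q1 => QFrom (substP e P) (substQ e q1)
  end.

Fixpoint closedC (bd : seq (var S)) (c : cond) : Prop :=
  match c with
  | CFalse => True
  | CB B => {subset tvars B <= bd}
  | CNot c1 => closedC bd c1
  | COr c1 c2 => closedC bd c1 /\ closedC bd c2
  | CEx P c1 => closedC (bd ++ patvars P) c1
  end.

Fixpoint closedQ (bd : seq (var S)) (q : query) : Prop :=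
  match q with
  | QEmpty => True
  | QFact f => {subset tvars f <= bd}
  | QPlus q1 q2 => closedQ bd q1 /\ closedQ bd q2
  | QImp c q1 => closedC bd c /\ closedQ bd q1
  | QFrom P q1 => closedQ (bd ++ patvars P) q1
  end.

(* well-formedness: facts have srt Fact, conditions {B} have srt Bool,
   patterns are terminating and preserving (F2 non-empty) *)
Definition wfP (P : pat) : Prop :=
  pq P <> [::] /\ foldr (fun t Pr => wt t (sFact S) /\ Pr) True (pbang P ++ pq P).

Fixpoint wfC (c : cond) : Prop :=
  match c with
  | CFalse => True
  | CB B => wt B (sBool S)
  | CNot c1 => wfC c1
  | COr c1 c2 => wfC c1 /\ wfC c2
  | CEx P c1 => wfP P /\ wfC c1
  end.

Fixpoint wfQ (q : query) : Prop :=
  match q with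
  | QEmpty => True
  | QFact f => wt f (sFact S)
  | QPlus q1 q2 => wfQ q1 /\ wfQ q2
  | QImp c q1 => wfC c /\ wfQ q1
  | QFrom P q1 => wfP P /\ wfQ q1
  end.

(* The algebra of facts D: equality in D (=_{E u A}) is [D], equality modulo
   the structural axioms is [A], and [nf] computes canonical forms w.r.t. the
   confluent terminating equations modulo A. *)
Definition fact_algebra (D A : term -> term -> Prop) (nf : term -> term) : Prop :=
  [/\
      (forall s : srt S, leS s s) /\
      (forall s1 s2 s3 : srt S, leS s1 s2 -> leS s2 s3 -> leS s1 s3) /\
      (forall s1 s2 : srt S, leS s1 s2 -> leS s2 s1 -> s1 = s2) /\
      sFact S != sBool S,
      [/\ (fdom (fTrue S) = [::] /\ fcod (fTrue S) = sBool S) /\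
          (fdom (fFalse S) = [::] /\ fcod (fFalse S) = sBool S),
          fdom (fNot S) = [:: sBool S] /\ fcod (fNot S) = sBool S,
          fdom (fAnd S) = [:: sBool S; sBool S] /\ fcod (fAnd S) = sBool S,
          fdom (fOr S) = [:: sBool S; sBool S] /\ fcod (fOr S) = sBool S &
          forall s, fdom (fEq s) = [:: s; s] /\ fcod (fEq s) = sBool S],
      [/\ (forall t, D t t) /\ (forall t u, D t u -> D u t) /\
          (forall t u w, D t u -> D u w -> D t w),
          (forall f ts us, rel2 D ts us -> D (TApp f ts) (TApp f us)),
          (forall s t u, D t u -> D (substF s t) (substF s u)),
          [/\ (forall t, A t t), (forall t u, A t u -> A u t),
              (forall t u w, A t u -> A u w -> A t w),
              (forall f ts us, rel2 A ts us -> A (TApp f ts) (TApp f us)) &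
              (forall s t u, A t u -> A (substF s t) (substF s u))] &
          (forall t u, A t u -> D t u)],
      (forall t, D (nf t) t) /\ (forall t u, D t u -> A (nf t) (nf u)) &
      [/\ (forall t, ground t -> wt t (sBool S) -> D t bTrue \/ D t bFalse) /\
          ~ D bTrue bFalse,
          (forall t, ground t -> wt t (sBool S) ->
             (D (TApp (fNot S) [:: t]) bTrue <-> D t bFalse)),
          (forall t u, ground t -> ground u -> wt t (sBool S) -> wt u (sBool S) ->
             (D (TApp (fAnd S) [:: t; u]) bTrue <-> D t bTrue /\ D u bTrue)),
          (forall t u, ground t -> ground u -> wt t (sBool S) -> wt u (sBool S) ->
             (D (TApp (fOr S) [:: t; u]) bTrue <-> D t bTrue \/ D u bTrue)) &
          (forall s t u, ground t -> ground u -> wt t s -> wt u s ->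
             (D (TApp (fEq s) [:: t; u]) bTrue <-> D t u))]].

Definition reduced (A : term -> term -> Prop) (nf : term -> term) (t : term) : Prop :=
  A (nf t) t.

Definition ump (A : term -> term -> Prop) (nf : term -> term) (t : term) : Prop :=
  reduced A nf t /\
  forall (t' : term) (s1 s2 : var S -> term),
    ground t' -> reduced A nf t' -> wt t' (sFact S) ->
    A (substF s1 t) t' -> A (substF s2 t) t' ->
    forall x, x \in tvars t -> A (s1 x) (s2 x).

Definition detP A nf (P : pat) : Prop :=
  exists f, pbang P ++ pq P = [:: f] /\ ump A nf f.

Fixpoint detC A nf (c : cond) : Prop :=
  match c with
  | CFalse => True
  | CB _ => True
  | CNot c1 => detC A nf c1
  | COr c1 c2 => detC A nf c1 /\ detC A nf c2
  | CEx P c1 => detP A nf P /\ detC A nf c1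
  end.

Fixpoint detQ A nf (q : query) : Prop :=
  match q with
  | QEmpty => True
  | QFact _ => True
  | QPlus q1 q2 => detQ A nf q1 /\ detQ A nf q2
  | QImp c q1 => detC A nf c /\ detQ A nf q1
  | QFrom P q1 => detP A nf P /\ detQ A nf q1
  end.

Variable D : term -> term -> Prop.

(* equality of multisets of facts in D (AC of o, identity empty) *)
Inductive meq : seq term -> seq term -> Prop :=
| meq_nil : meq [::] [::]
| meq_cons x F G1 G2 y : D x y -> meq F (G1 ++ G2) -> meq (x :: F) (G1 ++ y :: G2).

Fixpoint memD (t : term) (F : seq term) : Prop :=
  match F with
  | [::] => False
  | y :: F' => D t y \/ memD t F'
  end.

Definition newvars (e : env) (P : pat) : seq (var S) :=
  undup [seq y <- patvars P | y \notin map fst e].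

(* G = H o sigma'(P_! o P_?) with sigma' = {a/v, b/w}, b ground and sorted *)
Definition matches (G : seq term) (e : env) (P : pat) (H : seq term) (b : seq term) : Prop :=
  [/\ gr_list b, wts b (map (@vsort S) (newvars e P)) &
      meq G (H ++ map (substL (e ++ zip (newvars e P) b)) (pbang P ++ pq P))].

(* condition-evaluation stack frames; the head of a stack is its top *)
Inductive cframe : Type :=
| Res of term
| NotF
| Ev of env & cond
| EvD of env & cond
| ExF of seq term & env & pat & cond.

Inductive cstep (F : seq term) : seq cframe -> seq cframe -> Prop :=
| cs_false e St : cstep F (Ev e CFalse :: St) (Res bFalse :: St)
| cs_bool e B St : cstep F (Ev e (CB B) :: St) (Res (substL e B) :: St)
| cs_not e c St : cstep F (Ev e (CNot c) :: St) (Ev e c :: NotF :: St)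
| cs_notres B St : cstep F (Res B :: NotF :: St) (Res (TApp (fNot S) [:: B]) :: St)
| cs_or e c1 c2 St : cstep F (Ev e (COr c1 c2) :: St) (Ev e c2 :: EvD e c1 :: St)
| cs_downtrue B e c St : D B bTrue -> cstep F (Res B :: EvD e c :: St) (Res bTrue :: St)
| cs_downfalse B e c St : D B bFalse -> cstep F (Res B :: EvD e c :: St) (Ev e c :: St)
| cs_ex e P c St : cstep F (Ev e (CEx P c) :: St) (ExF F e P c :: St)
| cs_exmatch G e P c St H b : matches G e P H b ->
    cstep F (ExF G e P c :: St)
      (Ev (e ++ zip (newvars e P) b) c
        :: ExF (H ++ map (substL (e ++ zip (newvars e P) b)) (pbang P)) e P c :: St)
| cs_exfalse B G e P c St : D B bFalse ->
    cstep F (Res B :: ExF G e P c :: St) (ExF G e P c :: St)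
| cs_extrue B G e P c St : D B bTrue ->
    cstep F (Res B :: ExF G e P c :: St) (Res bTrue :: St)
| cs_exnone G e P c St : (forall H b, ~ matches G e P H b) ->
    cstep F (ExF G e P c :: St) (Res bFalse :: St).

Inductive cstate : Type :=
| CSt of seq term & seq cframe
| Sat of term.

Inductive cstepS : cstate -> cstate -> Prop :=
| css_step F St St' : cstep F St St' -> cstepS (CSt F St) (CSt F St')
| css_sat F B : cstepS (CSt F [:: Res B]) (Sat B).

Definition initC (F : seq term) (c : cond) : cstate := CSt F [:: Ev [::] c].

Inductive qframe : Type :=
| QEv of env & query
| QCnd of env & seq cframe & query
| QFr of seq term & env & pat & query.

Inductive qstate : Type :=
| QSt of seq term & seq term & seq qframe
| Ans of seq term.

Inductive qstepS : qstate -> qstate -> Prop :=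
| qs_fact F Acc e f St :
    qstepS (QSt F Acc (QEv e (QFact f) :: St)) (QSt F (Acc ++ [:: substL e f]) St)
| qs_empty F Acc e St : qstepS (QSt F Acc (QEv e QEmpty :: St)) (QSt F Acc St)
| qs_plus F Acc e q1 q2 St :
    qstepS (QSt F Acc (QEv e (QPlus q1 q2) :: St)) (QSt F Acc (QEv e q1 :: QEv e q2 :: St))
| qs_imp F Acc e c q St :
    qstepS (QSt F Acc (QEv e (QImp c q) :: St)) (QSt F Acc (QCnd e [:: Ev e c] q :: St))
| qs_condfalse F Acc e B q St : D B bFalse ->
    qstepS (QSt F Acc (QCnd e [:: Res B] q :: St)) (QSt F Acc St)
| qs_condtrue F Acc e B q St : D B bTrue ->
    qstepS (QSt F Acc (QCnd e [:: Res B] q :: St)) (QSt F Acc (QEv e q :: St))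
| qs_cond F Acc e CS CS' q St : cstep F CS CS' ->
    qstepS (QSt F Acc (QCnd e CS q :: St)) (QSt F Acc (QCnd e CS' q :: St))
| qs_from F Acc e P q St :
    qstepS (QSt F Acc (QEv e (QFrom P q) :: St)) (QSt F Acc (QFr F e P q :: St))
| qs_frommatch F Acc G e P q St H b : matches G e P H b ->
    qstepS (QSt F Acc (QFr G e P q :: St))
      (QSt F Acc (QEv (e ++ zip (newvars e P) b) q
        :: QFr (H ++ map (substL (e ++ zip (newvars e P) b)) (pbang P)) e P q :: St))
| qs_fromnone F Acc G e P q St : (forall H b, ~ matches G e P H b) ->
    qstepS (QSt F Acc (QFr G e P q :: St)) (QSt F Acc St)
| qs_ans F Acc : qstepS (QSt F Acc [::]) (Ans Acc).

Definition initQ (F : seq term) (q : query) : qstate := QSt F [::] [:: QEv [::] q].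

End Syntax.

Inductive star (T : Type) (R : T -> T -> Prop) : T -> T -> Prop :=
| star_refl x : star R x x
| star_step x y z : R x y -> star R y z -> star R x z.

Definition reach_nf (T : Type) (R : T -> T -> Prop) (x y : T) : Prop :=
  star R x y /\ forall z, ~ R y z.

(* Main.v *)
Require Import Defs.
From mathcomp Require Import all_boot.
From Stdlib Require Import Classical_Prop.
Set Implicit Arguments. Unset Strict Implicit. Unset Printing Implicit Defensive.

Section Terms.
Variable S : sig.
Implicit Types (t u : term S) (e : env S) (sb : var S -> term S).

Fixpoint allP (T : Type) (P : T -> Prop) (l : seq T) : Prop :=
  match l with [::] => True | x :: l' => P x /\ allP P l' end.

Fixpoint term_ind2 (P : term S -> Prop) (Hv : forall x, P (TVar x))
  (Ha : forall f ts, allP P ts -> P (TApp f ts)) (t : term S) : P t :=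
  match t with
  | TVar x => Hv x
  | TApp f ts => Ha f ts ((fix go (ts : seq (term S)) : allP P ts :=
       match ts with [::] => I | u :: us => conj (term_ind2 Hv Ha u) (go us) end) ts)
  end.

Lemma tvars_app f ts : tvars (TApp f ts) = flatten (map (@tvars S) ts).
Proof. by elim: ts => //= u us ->. Qed.

Lemma substF_app sb f ts : substF sb (TApp f ts) = TApp f (map (substF sb) ts).
Proof. by elim: ts => //= u us [->]. Qed.

Lemma substF_ext s1 s2 t :
  (forall y, y \in tvars t -> s1 y = s2 y) -> substF s1 t = substF s2 t.
Proof.
elim/term_ind2: t => [x /= H|f ts IH H]; first by apply: H; rewrite inE.
rewrite !substF_app; congr TApp.
move: IH H; rewrite tvars_app; elim: ts => //= u us IHus [IHu IHl] H.
rewrite (IHu) ?(IHus) // => y Hy; apply: H; rewrite mem_cat Hy ?orbT //.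
Qed.

Lemma substF_ground sb t : ground t -> substF sb t = t.
Proof.
rewrite /ground; elim/term_ind2: t => [x //|f ts IH].
rewrite tvars_app substF_app => H; congr TApp.
move: IH H; elim: ts => //= u us IHus [IHu IHl].
by move/eqP; rewrite -size_eq0 size_cat addn_eq0 !size_eq0 => /andP[/eqP H1 /eqP H2]; rewrite IHu // IHus.
Qed.

Lemma substF_ground2 sb t : (forall y, y \in tvars t -> ground (sb y)) -> ground (substF sb t).
Proof.
rewrite /ground; elim/term_ind2: t => [x /= H|f ts IH H]; first by apply: H; rewrite inE.
rewrite substF_app tvars_app.
move: IH H; rewrite tvars_app; elim: ts => //= u us IHus [IHu IHl] H.
rewrite IHu ?IHus // => y Hy; apply: H; rewrite mem_cat Hy ?orbT //.
Qed.

Lemma ground_app f ts : allP (@ground S) ts -> ground (TApp f ts).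
Proof.
rewrite /ground tvars_app; elim: ts => //= u us IH [-> H]; exact: IH.
Qed.

Variable leS_refl : forall s : srt S, leS s s.
Variable leS_trans : forall s1 s2 s3 : srt S, leS s1 s2 -> leS s2 s3 -> leS s1 s3.

Lemma wt_up t s1 s2 : wt t s1 -> leS s1 s2 -> wt t s2.
Proof.
case=> [x s H|f ts s Hw H] L; first by constructor; apply: leS_trans L.
by econstructor; [exact: Hw| apply: leS_trans L].
Qed.

Lemma wt_subst sb t s0 : (forall y, wt (sb y) (vsort y)) -> wt t s0 -> wt (substF sb t) s0.
Proof.
move=> Hs; elim/term_ind2: t s0 => [x s0 /= H|f ts IH s0 H].
  inversion H; subst; exact: wt_up (Hs x) _.
inversion H as [|? ? ? H3 H4]; subst; rewrite substF_app; econstructor; last by eassumption.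
move: IH H3; clear H; elim: ts (fdom f) => [|u us IHus] ss /= IH Hw; inversion Hw; subst.
  constructor.
by constructor; [apply: IH.1| apply: IHus => //; apply: IH.2].
Qed.

Fixpoint genv e : Prop :=
  match e with [::] => True | (y, u) :: e' => ground u /\ wt u (vsort y) /\ genv e' end.

Lemma genv_lookup e y u : genv e -> lookup e y = Some u -> ground u /\ wt u (vsort y).
Proof.
elim: e => //= [[z w] e IH] [G [W H]]; case: eqP => [<- [<-]|_ /IH]; auto.
Qed.

Lemma lookup_in e y : y \in map fst e -> exists u, lookup e y = Some u.
Proof.
elim: e => //= [[z w] e IH]; rewrite inE eq_sym; case: eqP => /= [_ _|_ /IH //]; eauto.
Qed.

Lemma genv_cat e1 e2 : genv e1 -> genv e2 -> genv (e1 ++ e2).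
Proof. by elim: e1 => //= [[z w] e IH] [? [? ?]] ?; split => //; split => //; apply: IH. Qed.

Lemma genv_zip ys b : gr_list b -> wts b (map (@vsort S) ys) -> genv (zip ys b).
Proof.
elim: ys b => [|y ys IH] [|u b] //= [G1 G2] W; inversion W; subst; split=> //; split => //.
exact: IH.
Qed.

Lemma substL_wt e t s0 : genv e -> wt t s0 -> wt (substL e t) s0.
Proof.
move=> He; apply: wt_subst => y; case E: (lookup e y) => [u|] /=.
  exact: (genv_lookup He E).2.
by constructor.
Qed.

Lemma substL_ground e t : genv e -> {subset tvars t <= map fst e} -> ground (substL e t).
Proof.
move=> He Hs; apply: substF_ground2 => y /Hs /lookup_in [u E]; rewrite E.
exact: (genv_lookup He E).1.
Qed.

End Terms.

Section Syn.
Variable S : sig.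
Implicit Types (t u : term S) (e : env S) (c : cond S) (q : query S) (P : pat S).

Lemma closedC_mono c (bd bd' : seq (var S)) : {subset bd <= bd'} -> closedC bd c -> closedC bd' c.
Proof.
elim: c bd bd' => [|B|c1 IH|c1 IH1 c2 IH2|P c IH] bd bd' H //=.
- by move=> Hs y /Hs /H.
- exact: IH.
- by case=> H1 H2; split; [exact: (IH1 _ _ H H1)|exact: (IH2 _ _ H H2)].
- move=> Hc; apply: (IH _ _ _ Hc) => y; rewrite !mem_cat => /orP[/H->|->]; by rewrite ?orbT.
Qed.

Lemma closedQ_mono q (bd bd' : seq (var S)) : {subset bd <= bd'} -> closedQ bd q -> closedQ bd' q.
Proof.
elim: q bd bd' => //= [f|q1 IH1 q2 IH2|c q IH|P q IH] bd bd' H.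
- by move=> Hs y /Hs /H.
- by case=> H1 H2; split; [exact: (IH1 _ _ H H1)|exact: (IH2 _ _ H H2)].
- by case=> H1 H2; split; [exact: (closedC_mono H H1)|exact: (IH _ _ H H2)].
- move=> Hc; apply: (IH _ _ _ Hc) => y; rewrite !mem_cat => /orP[/H->|->]; by rewrite ?orbT.
Qed.

Variable leS_refl : forall s : srt S, leS s s.
Variable leS_trans : forall s1 s2 s3 : srt S, leS s1 s2 -> leS s2 s3 -> leS s1 s3.

Lemma wfP_subst e P : genv e -> wfP P -> wfP (substP e P).
Proof.
move=> He [Hn Hw]; split; first by case: P Hn {Hw} => ? [].
rewrite /substP /= -map_cat; elim: (pbang P ++ pq P) Hw => //= u l IH [Hu Hl].
by split; [apply: substL_wt| apply: IH].
Qed.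

Lemma wfC_subst e c : genv e -> wfC c -> wfC (substC e c).
Proof.
move=> He; elim: c => [|B|c1 IH|c1 IH1 c2 IH2|P c IH] //=.
- exact: substL_wt.
- by case=> ? ?; split; auto.
- by case=> ? ?; split; [apply: wfP_subst| auto].
Qed.

Lemma wfQ_subst e q : genv e -> wfQ q -> wfQ (substQ e q).
Proof.
move=> He; elim: q => //= [f|q1 IH1 q2 IH2|c q IH|P q IH].
- exact: substL_wt.
- by case=> ? ?; split; auto.
- by case=> ? ?; split; [apply: wfC_subst| auto].
- by case=> ? ?; split; [apply: wfP_subst| auto].
Qed.

Variable rt : term S.

Fixpoint trans q : cond S :=
  match q with
  | QEmpty => CFalse S
  | QFact f => CB (TApp (fEq (sFact S)) [:: f; rt])
  | QPlus q1 q2 => COr (trans q1) (trans q2)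
  | QImp c q1 => CNot (COr (CNot (trans q1)) (CNot c))
  | QFrom P q1 => CEx P (trans q1)
  end.

Lemma trans_closed q bd : ground rt -> closedQ bd q -> closedC bd (trans q).
Proof.
move=> Hg; elim: q bd => //= [f|q1 IH1 q2 IH2|c q IH|P q IH] bd.
- by move=> Hs y; rewrite Hg !cats0 => /Hs.
- by case=> ? ?; split; auto.
- by case=> ? ?; split; auto.
- exact: IH.
Qed.

Hypothesis HEq : fdom (fEq (sFact S)) = [:: sFact S; sFact S] /\ fcod (fEq (sFact S)) = sBool S.

Lemma trans_wf q : wt rt (sFact S) -> wfQ q -> wfC (trans q).
Proof.
move=> Hw; elim: q => //= [f|q1 IH1 q2 IH2|c q IH|P q IH].
- move=> Hf; econstructor; last by rewrite HEq.2.
  by rewrite HEq.1; do 2 constructor => //; constructor.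
- by case=> ? ?; split; auto.
- by case=> ? ?; split; auto.
- by case=> ? ?; split; auto.
Qed.

Lemma trans_det A nf q : detQ A nf q -> detC A nf (trans q).
Proof. by elim: q => //= [q1 IH1 q2 IH2|c q IH|P q IH] [? ?]; split; auto. Qed.

End Syn.

Section Comm.
Variable S : sig.
Implicit Types (t u : term S) (e l : env S) (c : cond S) (q : query S) (P : pat S).
Variables (x : seq (var S)) (ts : seq (term S)) (l : env S).

Lemma lookup_zip_notin y : y \notin x -> lookup (zip x ts ++ l) y = lookup l y.
Proof.
elim: x ts => [|z zs IH] [|w ws] //=; rewrite inE negb_or => /andP[H1 H2].
by rewrite eq_sym (negbTE H1) IH.
Qed.

Lemma lookup_zip_map : uniq x -> size x = size ts ->
  map (fun y => odflt (TVar y) (lookup (zip x ts ++ l) y)) x = ts.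
Proof.
elim: x ts => [|z zs IH] [|w ws] //= /andP[Hz Hu] [Hs].
rewrite eqxx; congr cons; rewrite -{2}(IH ws) //; apply/eq_in_map => y Hy /=.
by case: eqP => // E; rewrite E Hy in Hz.
Qed.

Lemma substL_notin u : (forall y, y \in tvars u -> y \notin x) ->
  substL (zip x ts ++ l) u = substL l u.
Proof. by move=> H; apply: substF_ext => y /H Hy; rewrite lookup_zip_notin. Qed.

Lemma substL_list_notin (us : seq (term S)) :
  (forall y, y \in flatten (map (@tvars S) us) -> y \notin x) ->
  map (substL (zip x ts ++ l)) us = map (substL l) us.
Proof.
elim: us => //= u us IH H; rewrite substL_notin ?IH // => y Hy; apply: H;
  by rewrite mem_cat Hy ?orbT.
Qed.

Lemma substP_notin P : (forall y, y \in patvars P -> y \notin x) ->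
  substP (zip x ts ++ l) P = substP l P.
Proof.
rewrite /patvars map_cat flatten_cat => H; rewrite /substP !substL_list_notin // => y Hy;
  by apply: H; rewrite mem_cat Hy ?orbT.
Qed.

Lemma substC_notin c : (forall y, y \in cvars c -> y \notin x) ->
  substC (zip x ts ++ l) c = substC l c.
Proof.
elim: c => //= [B|c1 IH|c1 IH1 c2 IH2|P c1 IH] H.
- by rewrite substL_notin.
- by rewrite IH.
- by rewrite IH1 ?IH2 // => y Hy; apply: H; rewrite mem_cat Hy ?orbT.
- by rewrite substP_notin ?IH // => y Hy; apply: H; rewrite mem_cat Hy ?orbT.
Qed.

Variable r : opsym S.

Lemma substL_rx : uniq x -> size x = size ts ->
  substL (zip x ts ++ l) (TApp r (map (@TVar S) x)) = TApp r ts.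
Proof.
move=> Hu Hs; rewrite /substL substF_app -map_comp; congr TApp.
by rewrite -[RHS](lookup_zip_map Hu Hs); apply/eq_map => y.
Qed.

Lemma subst_trans q : uniq x -> size x = size ts ->
  (forall y, y \in qvars q -> y \notin x) ->
  substC (zip x ts ++ l) (trans (TApp r (map (@TVar S) x)) q) =
  trans (TApp r ts) (substQ l q).
Proof.
move=> Hu Hs; elim: q => //= [f|q1 IH1 q2 IH2|c q IH|P q IH] H.
- have -> : forall g (u w : term S), substL (zip x ts ++ l) (TApp g [:: u; w]) =
     TApp g [:: substL (zip x ts ++ l) u; substL (zip x ts ++ l) w].
    by move=> *; rewrite /substL substF_app.
  by rewrite substL_rx // substL_notin.
- by rewrite IH1 ?IH2 // => y Hy; apply: H; rewrite mem_cat Hy ?orbT.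
- by rewrite IH ?substC_notin // => y Hy; apply: H; rewrite mem_cat Hy ?orbT.
- by rewrite IH ?substP_notin // => y Hy; apply: H; rewrite mem_cat Hy ?orbT.
Qed.

End Comm.

Lemma star_trans (T : Type) (R : T -> T -> Prop) x y z :
  star R x y -> star R y z -> star R x z.
Proof. by elim=> // x0 y0 z0 H _ IH /IH; apply: star_step. Qed.

Lemma star_one (T : Type) (R : T -> T -> Prop) x y : R x y -> star R x y.
Proof. by move=> H; apply: star_step H (star_refl _ _). Qed.

Lemma star_first (T : Type) (R : T -> T -> Prop) x z :
  star R x z -> x = z \/ exists y, R x y /\ star R y z.
Proof. by case=> [x0|x0 y z0 H1 H2]; [left|right; exists y]. Qed.

Ltac strip L St :=
  lazymatch L with
  | St => match type of L with seq ?T => constr:(@nil T) | list ?T => constr:(@nil T) end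
  | ?P ++ St => P
  | ?a :: ?L' => let r := strip L' St in constr:(a :: r)
  end.

Section Mach.
Variable S : sig.
Variable D : term S -> term S -> Prop.
Variable F : seq (term S).
Notation cst := (cstep D F).
Notation qst := (@qstepS S D).

Lemma cstep_app s s' St : cst s s' -> cst (s ++ St) (s' ++ St).
Proof. by case=> *; rewrite /=; econstructor; eauto. Qed.

Lemma cstar_app s s' St : star cst s s' -> star cst (s ++ St) (s' ++ St).
Proof.
elim=> [x|x y z H _ IH]; first exact: star_refl.
by apply: star_step IH; apply: cstep_app.
Qed.

Lemma cstep_nonnil s s' : cst s s' -> s' <> [::].
Proof. by case. Qed.

Lemma cstep_res B y : ~ cst [:: Res B] y.
Proof. by move=> H; inversion H. Qed.

Lemma cstar_res B B' : star cst [:: Res B'] [:: Res B] -> B' = B.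
Proof. by move=> H; case: (star_first H) => [E|[y [Hs _]]]; [case: E|case: (cstep_res Hs)]. Qed.

Lemma cstep_frame s1 St y : cst (s1 ++ St) y -> s1 <> [::] ->
  (forall B, s1 <> [:: Res B]) -> exists s1', y = s1' ++ St /\ cst s1 s1'.
Proof.
case: s1 => [|f1 [|f2 s1]] //= H _ Hr; inversion H; subst;
  try (by exfalso; apply: (Hr _ erefl));
  match goal with |- exists s, ?L = s ++ ?St0 /\ _ =>
    let w := strip L St0 in exists w; split; [reflexivity| by econstructor; eauto] end.
Qed.

Lemma res_dec (s : seq (cframe S)) : (exists B, s = [:: Res B]) \/ (forall B, s <> [:: Res B]).
Proof. by case: s => [|[B| | | |] [|? ?]]; (try by right); left; exists B. Qed.

Lemma cstar_decomp s1 St B : star cst (s1 ++ St) [:: Res B] -> s1 <> [::] ->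
  exists B1, star cst s1 [:: Res B1] /\ star cst (Res B1 :: St) [:: Res B].
Proof.
have Hgen: forall x z, star cst x z -> forall s1, x = s1 ++ St -> z = [:: Res B] -> s1 <> [::] ->
  exists B1, star cst s1 [:: Res B1] /\ star cst (Res B1 :: St) [:: Res B].
  move=> x z; clear s1; elim=> [x0|x0 y z0 Hxy Hyz IH] s1 Ex Ez Hne; subst.
  - case: (res_dec s1) => [[B1 E]|Hr].
      by exists B1; split; [rewrite E; apply: star_refl| rewrite -Ez E; apply: star_refl].
    case: s1 Ez Hne Hr => [|f1 [|f2 s1]] //=; try by case=> -> -> _ /(_ B).
  - case: (res_dec s1) => [[B1 E]|Hr].
      by exists B1; split; [rewrite E; apply: star_refl| rewrite E in Hxy; apply: star_step Hxy Hyz].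
    case: (cstep_frame Hxy Hne Hr) => s1' [Ey Hst].
    case: (IH s1' Ey erefl (cstep_nonnil Hst)) => B1 [H1 H2].
    by exists B1; split => //; apply: star_step H1.
by move=> Hst Hne; apply: (Hgen _ _ Hst s1 erefl erefl Hne).
Qed.

Lemma qstep_shape Acc s y : qst (QSt F Acc s) y ->
  (s = [::] /\ y = Ans Acc) \/ exists Acc' s', y = QSt F Acc' s'.
Proof. by move=> H; inversion H; subst; eauto. Qed.

Lemma qstar_Ans Out z : star qst (Ans Out) z -> z = Ans Out.
Proof. by move=> H0; case: (star_first H0) => [<-|[y [H _]]] //; inversion H. Qed.

Lemma qstep_frame Acc fr s St y : qst (QSt F Acc (fr :: s ++ St)) y ->
  exists Acc' s', y = QSt F Acc' (s' ++ St) /\ qst (QSt F Acc (fr :: s)) (QSt F Acc' s').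
Proof.
move=> H; inversion H; subst;
  match goal with |- exists a s, QSt _ ?A ?L = QSt _ _ (s ++ ?St0) /\ _ =>
    let w := strip L St0 in exists A, w; split; [reflexivity| by econstructor; eauto] end.
Qed.

Lemma qstep_app Acc fr s Acc' s' St : qst (QSt F Acc (fr :: s)) (QSt F Acc' s') ->
  qst (QSt F Acc (fr :: s ++ St)) (QSt F Acc' (s' ++ St)).
Proof. by move=> H; inversion H; subst; rewrite /=; econstructor; eauto. Qed.

Lemma qstar_compose Acc s Acc' St : star qst (QSt F Acc s) (QSt F Acc' [::]) ->
  star qst (QSt F Acc (s ++ St)) (QSt F Acc' St).
Proof.
have Hgen: forall x z, star qst x z -> forall Acc s, x = QSt F Acc s -> z = QSt F Acc' [::] ->
  star qst (QSt F Acc (s ++ St)) (QSt F Acc' St).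
  move=> x z; clear Acc s; elim=> [x0|x0 y z0 Hxy Hyz IH] A s Ex Ez; subst.
    by case: Ez => -> ->; apply: star_refl.
  case: s Hxy => [|fr s] Hxy.
    by inversion Hxy; subst; move/qstar_Ans: Hyz.
  case: (qstep_shape Hxy) => [[//]|[A' [s' Ey]]]; subst.
  by apply: star_step (qstep_app _ Hxy) (IH _ _ erefl erefl).
by move=> Hs; apply: (Hgen _ _ Hs _ _ erefl erefl).
Qed.

Lemma qstar_decomp Acc s St Out : star qst (QSt F Acc (s ++ St)) (QSt F Out [::]) ->
  exists Acc1, star qst (QSt F Acc s) (QSt F Acc1 [::]) /\
               star qst (QSt F Acc1 St) (QSt F Out [::]).
Proof.
have Hgen: forall x z, star qst x z -> forall Acc s, x = QSt F Acc (s ++ St) ->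
  z = QSt F Out [::] -> exists Acc1, star qst (QSt F Acc s) (QSt F Acc1 [::]) /\
               star qst (QSt F Acc1 St) (QSt F Out [::]).
  move=> x z; clear Acc s; elim=> [x0|x0 y z0 Hxy Hyz IH] A s Ex Ez; subst.
    case: s Ez => [|fr s] // Ez; exists A; split; [apply: star_refl| rewrite -Ez; apply: star_refl].
  case: s Hxy => [|fr s] Hxy.
    by exists A; split; [apply: star_refl| apply: star_step Hyz].
  case: (qstep_frame Hxy) => A' [s' [Ey Hst]]; subst.
  case: (IH _ _ erefl erefl) => A1 [H1 H2].
  by exists A1; split => //; apply: star_step H1.
by move=> Hs; apply: (Hgen _ _ Hs _ _ erefl erefl).
Qed.

Lemma qstep_shift Acc s Acc' s' : qst (QSt F Acc s) (QSt F Acc' s') ->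
  exists X, Acc' = Acc ++ X /\ forall A0, qst (QSt F A0 s) (QSt F (A0 ++ X) s').
Proof.
move=> H; inversion H; subst;
  try (by exists [:: substL e f]; split => // A0; constructor);
  by exists [::]; rewrite cats0; split => // A0; rewrite cats0; econstructor; eauto.
Qed.

Lemma qstar_shift Acc s Acc' s' : star qst (QSt F Acc s) (QSt F Acc' s') ->
  exists X, Acc' = Acc ++ X /\ forall A0, star qst (QSt F A0 s) (QSt F (A0 ++ X) s').
Proof.
have Hgen: forall x z, star qst x z -> forall Acc s, x = QSt F Acc s ->
  z = QSt F Acc' s' -> exists X, Acc' = Acc ++ X /\
    forall A0, star qst (QSt F A0 s) (QSt F (A0 ++ X) s').
  move=> x z; clear Acc s; elim=> [x0|x0 y z0 Hxy Hyz IH] A s Ex Ez; subst.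
    case: Ez => -> ->; exists [::]; rewrite cats0; split => // A0; rewrite cats0; apply: star_refl.
  case: (qstep_shape Hxy) => [[_ Ey]|[A1 [s1 Ey]]]; subst.
    by move/qstar_Ans: Hyz.
  case: (qstep_shift Hxy) => X1 [E1 H1]; case: (IH _ _ erefl erefl) => X2 [E2 H2].
  exists (X1 ++ X2); split; first by rewrite E2 E1 catA.
  by move=> A0; apply: star_step (H1 A0) _; rewrite catA.
by move=> Hs; apply: (Hgen _ _ Hs _ _ erefl erefl).
Qed.

Lemma qstar_nil Acc Out : star qst (QSt F Acc [::]) (QSt F Out [::]) -> Acc = Out.
Proof.
move=> H0; case: (star_first H0) => [[]//|[y [H1 H2]]]; inversion H1; subst.
by move/qstar_Ans: H2.
Qed.

Lemma qstar_toAns Acc s Out : star qst (QSt F Acc s) (Ans Out) ->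
  star qst (QSt F Acc s) (QSt F Out [::]).
Proof.
have Hgen: forall x z, star qst x z -> forall Acc s, x = QSt F Acc s -> z = Ans Out ->
  star qst (QSt F Acc s) (QSt F Out [::]).
  move=> x z; clear Acc s; elim=> [x0|x0 y z0 Hxy Hyz IH] A s Ex Ez; subst => //.
  case: (qstep_shape Hxy) => [[Es Ey]|[A1 [s1 Ey]]]; subst.
    by move/qstar_Ans: Hyz => [->]; apply: star_refl.
  by apply: star_step Hxy (IH _ _ erefl erefl).
by move=> Hs; apply: (Hgen _ _ Hs _ _ erefl erefl).
Qed.

Lemma qcnd_decomp Acc e CS q St Out :
  star qst (QSt F Acc (QCnd e CS q :: St)) (QSt F Out [::]) ->
  exists B, star cst CS [:: Res B] /\
    star qst (QSt F Acc (QCnd e [:: Res B] q :: St)) (QSt F Out [::]).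
Proof.
have Hgen: forall x z, star qst x z -> forall CS, x = QSt F Acc (QCnd e CS q :: St) ->
  z = QSt F Out [::] -> exists B, star cst CS [:: Res B] /\
    star qst (QSt F Acc (QCnd e [:: Res B] q :: St)) (QSt F Out [::]).
  move=> x z; clear CS; elim=> [x0|x0 y z0 Hxy Hyz IH] CS Ex Ez; subst => //.
  inversion Hxy; subst.
  - by exists B; split; [apply: star_refl| apply: star_step Hxy Hyz].
  - by exists B; split; [apply: star_refl| apply: star_step Hxy Hyz].
  - case: (IH _ erefl erefl) => B [H1 H2].
    by exists B; split => //; apply: star_step H1.
by move=> Hs; apply: (Hgen _ _ Hs _ erefl erefl).
Qed.

Lemma qcnd_compose Acc e CS CS' q St : star cst CS CS' ->
  star qst (QSt F Acc (QCnd e CS q :: St)) (QSt F Acc (QCnd e CS' q :: St)).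
Proof.
elim=> [x|x y z H _ IH]; first exact: star_refl.
by apply: star_step IH; apply: qs_cond.
Qed.

End Mach.

Section Inv.
Variable S : sig.
Variable D : term S -> term S -> Prop.
Variable F : seq (term S).
Notation cst := (cstep D F).
Notation qst := (@qstepS S D).

Definition isRes1 (s : seq (cframe S)) : bool := if s is [:: Res _] then true else false.

Lemma cfirst x B : star cst x [:: Res B] -> ~~ isRes1 x ->
  exists y, cst x y /\ star cst y [:: Res B].
Proof. by move=> H Hn; case: (star_first H) => [E|//]; rewrite E in Hn. Qed.

Lemma qfirst Acc s Out : star qst (QSt F Acc s) (QSt F Out [::]) -> s <> [::] ->
  exists y, qst (QSt F Acc s) y /\ star qst y (QSt F Out [::]).
Proof. by move=> H Hn; case: (star_first H) => [[_ E]|//]; rewrite E in Hn. Qed.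

Lemma cev_inv e c St y : cst (Ev e c :: St) y -> y =
  match c with
  | CFalse => Res (bFalse S) :: St
  | CB B => Res (substL e B) :: St
  | CNot c1 => Ev e c1 :: NotF S :: St
  | COr c1 c2 => Ev e c2 :: EvD e c1 :: St
  | CEx P c1 => ExF F e P c1 :: St
  end.
Proof. by move=> H; inversion H. Qed.

Lemma cresN_inv B St y : cst (Res B :: NotF S :: St) y -> y = Res (TApp (fNot S) [:: B]) :: St.
Proof. by move=> H; inversion H. Qed.

Lemma cresD_inv B e c St y : cst (Res B :: EvD e c :: St) y ->
  (D B (bTrue S) /\ y = Res (bTrue S) :: St) \/ (D B (bFalse S) /\ y = Ev e c :: St).
Proof. by move=> H; inversion H; subst; auto. Qed.

Lemma cresEx_inv B G e P c St y : cst (Res B :: ExF G e P c :: St) y ->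
  (D B (bTrue S) /\ y = Res (bTrue S) :: St) \/ (D B (bFalse S) /\ y = ExF G e P c :: St).
Proof. by move=> H; inversion H; subst; auto. Qed.

Lemma cex_inv G e P c St y : cst (ExF G e P c :: St) y ->
  (exists H b, matches D G e P H b /\ y = Ev (e ++ zip (newvars e P) b) c
      :: ExF (H ++ map (substL (e ++ zip (newvars e P) b)) (pbang P)) e P c :: St) \/
  ((forall H b, ~ matches D G e P H b) /\ y = Res (bFalse S) :: St).
Proof. by move=> H; inversion H; subst; [left; do 2 eexists| right]; eauto. Qed.

Lemma qev_inv Acc e q St y : qst (QSt F Acc (QEv e q :: St)) y -> y =
  match q with
  | QEmpty => QSt F Acc St
  | QFact f => QSt F (Acc ++ [:: substL e f]) St
  | QPlus q1 q2 => QSt F Acc (QEv e q1 :: QEv e q2 :: St)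
  | QImp c q1 => QSt F Acc (QCnd e [:: Ev e c] q1 :: St)
  | QFrom P q1 => QSt F Acc (QFr F e P q1 :: St)
  end.
Proof. by move=> H; inversion H. Qed.

Lemma qcndres_inv Acc e B q St y : qst (QSt F Acc (QCnd e [:: Res B] q :: St)) y ->
  (D B (bFalse S) /\ y = QSt F Acc St) \/ (D B (bTrue S) /\ y = QSt F Acc (QEv e q :: St)).
Proof.
move=> H; inversion H; subst; auto.
by case: (cstep_res H7).
Qed.

Lemma qfr_inv Acc G e P q St y : qst (QSt F Acc (QFr G e P q :: St)) y ->
  (exists H b, matches D G e P H b /\ y = QSt F Acc (QEv (e ++ zip (newvars e P) b) q
      :: QFr (H ++ map (substL (e ++ zip (newvars e P) b)) (pbang P)) e P q :: St)) \/
  ((forall H b, ~ matches D G e P H b) /\ y = QSt F Acc St).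
Proof. by move=> H; inversion H; subst; [left; do 2 eexists| right]; eauto. Qed.

Definition QR e q Out := star qst (QSt F [::] [:: QEv e q]) (QSt F Out [::]).

Lemma QR_cat e1 q1 O1 rest O2 : QR e1 q1 O1 ->
  star qst (QSt F [::] rest) (QSt F O2 [::]) ->
  star qst (QSt F [::] (QEv e1 q1 :: rest)) (QSt F (O1 ++ O2) [::]).
Proof.
move=> H1 H2; have H1' := qstar_compose rest H1.
case: (qstar_shift H2) => X [-> HX]; apply: star_trans H1' (HX O1).
Qed.

Lemma QR_split e1 q1 rest Out :
  star qst (QSt F [::] (QEv e1 q1 :: rest)) (QSt F Out [::]) ->
  exists O1 O2, Out = O1 ++ O2 /\ QR e1 q1 O1 /\ star qst (QSt F [::] rest) (QSt F O2 [::]).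
Proof.
move=> H; case: (@qstar_decomp _ _ F [::] [:: QEv e1 q1] rest Out H) => A1 [H1 H2].
case: (qstar_shift H2) => X [E HX]; exists A1, X; split => //; split => //.
Qed.

End Inv.

Section Main.
Variable S : sig.
Variable D : term S -> term S -> Prop.
Variable F : seq (term S).
Notation cst := (cstep D F).
Notation qst := (@qstepS S D).
Notation bT := (bTrue S).
Notation bF := (bFalse S).
Notation notB B := (TApp (fNot S) [:: B]).

Hypothesis Dref : forall t, D t t.
Hypothesis Dsym : forall t u, D t u -> D u t.
Hypothesis Dtr : forall t u w, D t u -> D u w -> D t w.
Hypothesis Htf : ~ D bT bF.
Hypothesis Hdich : forall t, ground t -> wt t (sBool S) -> D t bT \/ D t bF.
Hypothesis Hnot : forall t, ground t -> wt t (sBool S) -> (D (notB t) bT <-> D t bF).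
Hypothesis Heq : forall s t u, ground t -> ground u -> wt t s -> wt u s ->
             (D (TApp (fEq s) [:: t; u]) bT <-> D t u).
Hypothesis leS_refl : forall s : srt S, leS s s.
Hypothesis leS_trans : forall s1 s2 s3 : srt S, leS s1 s2 -> leS s2 s3 -> leS s1 s3.
Hypothesis HT : fdom (fTrue S) = [::] /\ fcod (fTrue S) = sBool S.
Hypothesis HF : fdom (fFalse S) = [::] /\ fcod (fFalse S) = sBool S.
Hypothesis HN : fdom (fNot S) = [:: sBool S] /\ fcod (fNot S) = sBool S.
Hypothesis HE : fdom (fEq (sFact S)) = [:: sFact S; sFact S] /\ fcod (fEq (sFact S)) = sBool S.

Definition goodB B := ground B /\ wt B (sBool S).

Definition goodF (fr : cframe S) : Prop :=
  match fr with
  | Res B => goodB B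
  | NotF => True
  | Ev e c => genv e /\ closedC (map fst e) c /\ wfC c
  | EvD e c => genv e /\ closedC (map fst e) c /\ wfC c
  | ExF G e P c => genv e /\ closedC (map fst e ++ patvars P) c /\ wfC c /\ wfP P
  end.

Lemma goodT : goodB bT.
Proof. by split => //; apply: wt_app; [rewrite HT.1; constructor| rewrite HT.2]. Qed.
Lemma goodFa : goodB bF.
Proof. by split => //; apply: wt_app; [rewrite HF.1; constructor| rewrite HF.2]. Qed.
Lemma goodN B : goodB B -> goodB (notB B).
Proof.
case=> G W; split; first by rewrite /ground /= G.
by apply: wt_app; [rewrite HN.1; constructor => //; constructor| rewrite HN.2].
Qed.

Lemma size_wts (ts : seq (term S)) ss : wts ts ss -> size ts = size ss.
Proof. by elim=> //= t0 ts0 s0 ss0 _ _ ->. Qed.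

Lemma env_ext e P b : genv e -> gr_list b -> wts b (map (@vsort S) (newvars e P)) ->
  genv (e ++ zip (newvars e P) b) /\
  {subset map fst e ++ patvars P <= map fst (e ++ zip (newvars e P) b)}.
Proof.
move=> He Hg Hw; split; first by apply: genv_cat => //; apply: genv_zip.
have Hs := size_wts Hw; rewrite size_map in Hs.
rewrite map_cat; have -> : map fst (zip (newvars e P) b) = newvars e P.
  by have := @unzip1_zip _ _ (newvars e P) b; rewrite Hs leqnn; apply.
move=> y; rewrite !mem_cat => /orP[->//|Hy]; case E: (y \in map fst e) => //=.
by rewrite /newvars mem_undup mem_filter E Hy.
Qed.

Lemma cstep_good s s' : allP goodF s -> cst s s' -> allP goodF s'.
Proof.
move=> Hg H; case: H Hg => /=.
- by move=> e St [_ HS]; split => //; apply: goodFa.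
- move=> e B St [[He [Hc Hw]] HS]; split => //; split.
    exact: substL_ground.
  exact: substL_wt.
- by move=> e c St [[He [Hc Hw]] HS].
- by move=> B St [HB [_ HS]]; split => //; apply: goodN.
- by move=> e c1 c2 St [[He [[Hc1 Hc2] [Hw1 Hw2]]] HS].
- by move=> B e c St _ [_ [_ HS]]; split => //; apply: goodT.
- by move=> B e c St _ [_ [HE' HS]].
- by move=> e P c St [[He [Hc [HP Hw]]] HS].
- move=> G e P c St H b [Hb Hwb _] [[He [Hc [Hw HP]]] HS].
  case: (env_ext He Hb Hwb) => He' Hsub.
  by split; [split => //; split => //; apply: closedC_mono Hc|].
- by move=> B G e P c St _ [_ HS].
- by move=> B G e P c St _ [_ [_ HS]]; split => //; apply: goodT.
- by move=> G e P c St _ [_ HS]; split => //; apply: goodFa.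
Qed.

Lemma cstar_good s s' : star cst s s' -> allP goodF s -> allP goodF s'.
Proof. by elim=> // x y z H _ IH Hg; apply: IH; apply: cstep_good H. Qed.

Lemma CR_good e c B : star cst [:: Ev e c] [:: Res B] -> genv e ->
  closedC (map fst e) c -> wfC c -> goodB B.
Proof. by move=> H He Hc Hw; case: (cstar_good H) => //. Qed.

Lemma notboth B : D B bT -> D B bF -> False.
Proof. by move=> H1 H2; apply: Htf; apply: Dtr (Dsym H1) H2. Qed.

Lemma not_false B : goodB B -> (D (notB B) bF <-> D B bT).
Proof.
move=> HB; have HN' := goodN HB; case: HB => G W.
split => H.
  case: (Hdich G W) => // HF'; exfalso; apply: (notboth (proj2 (Hnot G W) HF') H).
case: (Hdich HN'.1 HN'.2) => // HT'; exfalso; apply: (notboth H (proj1 (Hnot G W) HT')).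
Qed.

Lemma not_true B : goodB B -> (D (notB B) bT <-> D B bF).
Proof. by case=> G W; apply: Hnot. Qed.

Definition rel rt B Out := (D B bT /\ memD D rt Out) \/ (D B bF /\ ~ memD D rt Out).

Lemma memD_cat t l1 l2 : memD D t (l1 ++ l2) <-> memD D t l1 \/ memD D t l2.
Proof. elim: l1 => /= [|y l IH]; [tauto| move: IH; tauto]. Qed.

Lemma rel_nn rt B Out : goodB B -> rel rt B Out -> rel rt (notB (notB B)) Out.
Proof.
move=> HB; have HN' := goodN HB.
case=> [[H1 H2]|[H1 H2]]; [left|right]; split => //.
  by apply/(not_true HN')/(not_false HB).
by apply/(not_false HN')/(not_true HB).
Qed.

Lemma rel_notT rt : rel rt (notB bT) [::].
Proof. by right; split => //; apply/(not_false goodT). Qed.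

Lemma rel_true_mem rt B Out : rel rt B Out -> D B bT -> memD D rt Out.
Proof. by case=> [[_ //]|[H1 _] H2]; case: (notboth H2 H1). Qed.

Lemma rel_false_mem rt B Out : rel rt B Out -> D B bF -> ~ memD D rt Out.
Proof. by case=> [[H1 _] H2|[_ //]]; case: (notboth H1 H2). Qed.

Lemma meq_size l1 l2 : meq D l1 l2 -> size l1 = size l2.
Proof. by elim=> //= x l G1 G2 y _ _ ->; rewrite !size_cat /= addnS. Qed.

Lemma match_size G e P H b : pq P <> [::] -> matches D G e P H b ->
  size (H ++ map (substL (e ++ zip (newvars e P) b)) (pbang P)) < size G.
Proof.
move=> Hn [_ _ /meq_size ->]; rewrite !size_cat !size_map size_cat ltn_add2l.
by rewrite -{1}(addn0 (size (pbang P))) ltn_add2l; case: (pq P) Hn.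
Qed.

Lemma cond_wn c e : genv e -> closedC (map fst e) c -> wfC c ->
  exists B, star cst [:: Ev e c] [:: Res B].
Proof.
elim: c e => [|B0|c1 IH|c1 IH1 c2 IH2|P c1 IH] e He /= Hc Hw.
- by exists bF; apply: star_one; constructor.
- by exists (substL e B0); apply: star_one; constructor.
- case: (IH e He Hc Hw) => B1 H1; exists (notB B1).
  apply: star_step; first by constructor.
  apply: star_trans (cstar_app [:: NotF S] H1) _; apply: star_one; constructor.
- case: Hc Hw => Hc1 Hc2 [Hw1 Hw2].
  case: (IH2 e He Hc2 Hw2) => B2 H2.
  have G2 := CR_good H2 He Hc2 Hw2.
  have Hr : star cst [:: Ev e (COr c1 c2)] [:: Res B2; EvD e c1].
    by apply: star_step; [constructor| apply: (cstar_app [:: EvD e c1] H2)].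
  case: (Hdich G2.1 G2.2) => HB2.
    by exists bT; apply: star_trans Hr _; apply: star_one; constructor.
  case: (IH1 e He Hc1 Hw1) => B1 H1; exists B1.
  by apply: star_trans Hr _; apply: star_step H1; constructor.
- case: Hw => HP Hw.
  suff: forall n G, size G < n -> exists B, star cst [:: ExF G e P c1] [:: Res B].
    case/(_ (size F).+1 F (ltnSn _)) => B HB; exists B; apply: star_step HB; constructor.
  elim=> // n IHn G HG.
  case: (Classical_Prop.classic (exists H b, matches D G e P H b)) => [[H [b Hm]]|Hnm].
    have [Hb Hwb _] := Hm.
    case: (env_ext He Hb Hwb) => He' Hsub.
    case: (IH _ He' (closedC_mono Hsub Hc) Hw) => B1 H1.
    have G1 := CR_good H1 He' (closedC_mono Hsub Hc) Hw.
    have Hr := cstar_app [:: ExF (H ++ map (substL (e ++ zip (newvars e P) b)) (pbang P)) e P c1] H1.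
    case: (Hdich G1.1 G1.2) => HB1.
      exists bT; apply: star_step; first by apply: cs_exmatch Hm.
      by apply: star_trans Hr _; apply: star_one; constructor.
    have Hlt := match_size HP.1 Hm.
    case: (IHn _ (leq_trans Hlt HG)) => B2 H2; exists B2.
    apply: star_step; first by apply: cs_exmatch Hm.
    by apply: star_trans Hr _; apply: star_step H2; constructor.
  exists bF; apply: star_one; constructor => H b Hm; apply: Hnm; eauto.
Qed.

Lemma cons_nn (T : Type) (a : T) s : a :: s <> [::]. Proof. by []. Qed.
Variable rt : term S.
Hypothesis Hrt : ground rt.
Hypothesis Hwrt : wt rt (sFact S).

Lemma fact_case e f : genv e -> {subset tvars f <= map fst e} -> wt f (sFact S) ->
  goodB (substL e (TApp (fEq (sFact S)) [:: f; rt])) /\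
  rel rt (substL e (TApp (fEq (sFact S)) [:: f; rt])) [:: substL e f].
Proof.
move=> He Hs Hw.
have -> : substL e (TApp (fEq (sFact S)) [:: f; rt]) =
          TApp (fEq (sFact S)) [:: substL e f; substL e rt] by rewrite /substL substF_app.
have -> : substL e rt = rt by rewrite /substL substF_ground.
have Gf := substL_ground He Hs; have Wf := substL_wt leS_refl leS_trans He Hw.
have GB : goodB (TApp (fEq (sFact S)) [:: substL e f; rt]).
  split; first by apply: ground_app.
  by apply: wt_app; [rewrite HE.1; do 2 constructor => //; constructor| rewrite HE.2].
split => //; case: (Hdich GB.1 GB.2) => H.
  by left; split => //=; left; apply: Dsym; apply/(Heq Gf Hrt Wf Hwrt).
right; split => //= [[Hm|//]]; apply: (notboth _ H).
by apply/(Heq Gf Hrt Wf Hwrt); apply: Dsym.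
Qed.

Lemma main q : forall e, genv e -> closedQ (map fst e) q -> wfQ q ->
  (forall Out, QR D F e q Out -> exists B, star cst [:: Ev e (trans rt q)] [:: Res B] /\ rel rt B Out) /\
  (forall B, star cst [:: Ev e (trans rt q)] [:: Res B] -> exists Out, QR D F e q Out /\ rel rt B Out) /\
  (exists Out, QR D F e q Out).
Proof.
elim: q => [|f|q1 IH1 q2 IH2|c q1 IH|P q1 IH] e He /= Hc Hw.
-
  have Hq : QR D F e (QEmpty S) [::] by apply: star_one; apply: qs_empty.
  have Hrl : rel rt bF [::] by rewrite /rel; right; split => //; apply: Dref.
  split; [|split].
  + move=> Out HQ; case: (qfirst HQ) => // ? [/qev_inv -> /qstar_nil <-].
    by exists bF; split => //; apply: star_one; constructor.
  + move=> B HC; case: (cfirst HC) => // ? [/cev_inv -> /cstar_res <-].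
    by exists [::].
  + by exists [::].
-
  case: (fact_case He Hc Hw) => GB Hrl.
  have Hq : QR D F e (QFact f) [:: substL e f] by apply: star_step; [apply: qs_fact| apply: star_refl].
  split; [|split].
  + move=> Out HQ; case: (qfirst HQ) => // ? [/qev_inv -> /qstar_nil <-].
    by eexists; split; [apply: star_one; constructor| exact: Hrl].
  + move=> B HC; case: (cfirst HC) => // ? [/cev_inv -> /cstar_res <-].
    by exists [:: substL e f].
  + by eexists; exact: Hq.
-
  case: Hc Hw => Hc1 Hc2 [Hw1 Hw2].
  case: (IH1 e He Hc1 Hw1) => A1 [B1 C1]; case: (IH2 e He Hc2 Hw2) => A2 [B2 C2].
  split; [|split].
  + move=> Out HQ; case: (qfirst HQ) => // ? [/qev_inv -> HQ'].
    case: (QR_split HQ') => O1 [O2 [-> [HQ1 HQ2]]].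
    case: (A1 _ HQ1) => b1 [Hb1 R1]; case: (A2 _ HQ2) => b2 [Hb2 R2].
    have Hr : star cst [:: Ev e (COr (trans rt q1) (trans rt q2))] [:: Res b2; EvD e (trans rt q1)].
      by apply: star_step; [constructor| apply: (cstar_app [:: EvD e (trans rt q1)] Hb2)].
    case: R2 => [[T2 M2]|[F2 M2]].
      exists bT; split; first by apply: star_trans Hr _; apply: star_one; constructor.
      by left; split => //; apply/memD_cat; right.
    exists b1; split; first by apply: star_trans Hr _; apply: star_step Hb1; constructor.
    case: R1 => [[T1 M1]|[F1 M1]]; [left|right]; split => //; rewrite memD_cat; tauto.
  + move=> B HC; case: (cfirst HC) => // ? [/cev_inv -> HC'].
    case: (@cstar_decomp _ _ F [:: Ev e (trans rt q2)] [:: EvD e (trans rt q1)] B HC' (@cons_nn _ _ _))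
      => b2 [Hb2 Hr].
    case: (B2 _ Hb2) => O2 [HQ2 R2].
    case: (cfirst Hr) => // y' [/cresD_inv [[T2 ->]|[F2 ->]] Hr'].
      move/cstar_res: Hr' => <-; case: C1 => O1 HQ1.
      exists (O1 ++ O2); split; first by apply: star_step; [apply: qs_plus| apply: QR_cat HQ1 HQ2].
      by left; split => //; apply/memD_cat; right; apply: rel_true_mem R2 T2.
    case: (B1 _ Hr') => O1 [HQ1 R1].
    exists (O1 ++ O2); split; first by apply: star_step; [apply: qs_plus| apply: QR_cat HQ1 HQ2].
    have M2 := rel_false_mem R2 F2.
    case: R1 => [[T1 M1]|[F1 M1]]; [left|right]; split => //; rewrite memD_cat; tauto.
  + case: C1 => O1 HQ1; case: C2 => O2 HQ2; exists (O1 ++ O2).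
    by apply: star_step; [apply: qs_plus| apply: QR_cat HQ1 HQ2].
-
  case: Hc Hw => Hcc Hc1 [Hwc Hw1].
  case: (IH e He Hc1 Hw1) => A1 [B1 C1].
  have Htc := trans_closed Hrt Hc1.
  have Htw := trans_wf leS_refl HE Hwrt Hw1.
  set tq := trans rt q1.
  have Hpre : forall Bc, star cst [:: Ev e c] [:: Res Bc] ->
      star cst [:: Ev e (CNot (COr (CNot tq) (CNot c)))]
               [:: Res (notB Bc); EvD e (CNot tq); NotF S].
    move=> Bc Hbc; apply: star_step; first by constructor.
    apply: star_step; first by constructor.
    apply: star_step; first by constructor.
    apply: star_trans (cstar_app [:: NotF S; EvD e (CNot tq); NotF S] Hbc) _.
    by apply: star_one; constructor.
  have Hfalse : forall Bc, star cst [:: Ev e c] [:: Res Bc] -> D (notB Bc) bT ->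
      star cst [:: Ev e (CNot (COr (CNot tq) (CNot c)))] [:: Res (notB bT)].
    move=> Bc Hbc HT'; apply: star_trans (Hpre _ Hbc) _.
    by apply: star_step; [apply: cs_downtrue HT'| apply: star_one; constructor].
  have Htrue : forall Bc Bq, star cst [:: Ev e c] [:: Res Bc] -> D (notB Bc) bF ->
      star cst [:: Ev e tq] [:: Res Bq] ->
      star cst [:: Ev e (CNot (COr (CNot tq) (CNot c)))] [:: Res (notB (notB Bq))].
    move=> Bc Bq Hbc HF' Hbq; apply: star_trans (Hpre _ Hbc) _.
    apply: star_step; first by apply: cs_downfalse HF'.
    apply: star_step; first by constructor.
    apply: star_trans (cstar_app [:: NotF S; NotF S] Hbq) _; rewrite /=.
    by apply: star_step; [exact: cs_notres| apply: star_one; exact: cs_notres].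
  split; [|split].
  + move=> Out HQ; case: (qfirst HQ) => // ? [/qev_inv -> HQ'].
    case: (qcnd_decomp HQ') => Bc [Hbc HQ''].
    have Gc := CR_good Hbc He Hcc Hwc.
    case: (qfirst HQ'') => // y' [/qcndres_inv [[Fc ->]|[Tc ->]] HQ3].
      move/qstar_nil: HQ3 => <-; exists (notB bT); split; last exact: rel_notT.
      by apply: Hfalse Hbc _; apply/(not_true Gc).
    case: (A1 _ HQ3) => Bq [Hbq Rq].
    have Gq := CR_good Hbq He Htc Htw.
    exists (notB (notB Bq)); split; last exact: rel_nn.
    by apply: Htrue Hbc _ Hbq; apply/(not_false Gc).
  + move=> B HC.
    case: (cfirst HC) => // ? [/cev_inv -> {}HC].
    case: (cfirst HC) => // ? [/cev_inv -> {}HC].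
    case: (cfirst HC) => // ? [/cev_inv -> {}HC].
    case: (@cstar_decomp _ _ F [:: Ev e c] [:: NotF S; EvD e (CNot tq); NotF S] B HC (@cons_nn _ _ _))
      => Bc [Hbc {}HC].
    have Gc := CR_good Hbc He Hcc Hwc.
    case: (cfirst HC) => // ? [/cresN_inv -> {}HC].
    case: (cfirst HC) => // ? [/cresD_inv [[T1 ->]|[F1 ->]] {}HC].
      case: (cfirst HC) => // ? [/cresN_inv -> /cstar_res <-].
      exists [::]; split; last exact: rel_notT.
      apply: star_step; first by apply: qs_imp.
      apply: star_trans (@qcnd_compose _ _ F [::] e _ _ q1 [::] Hbc) _.
      by apply: star_one; apply: qs_condfalse; apply/(not_true Gc).
    case: (cfirst HC) => // ? [/cev_inv -> {}HC].
    case: (@cstar_decomp _ _ F [:: Ev e tq] [:: NotF S; NotF S] B HC (@cons_nn _ _ _))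
      => Bq [Hbq {}HC].
    have Gq := CR_good Hbq He Htc Htw.
    case: (cfirst HC) => // ? [/cresN_inv -> {}HC].
    case: (cfirst HC) => // ? [/cresN_inv -> /cstar_res <-].
    case: (B1 _ Hbq) => Out [HQ Rq]; exists Out; split; last exact: rel_nn.
    apply: star_step; first by apply: qs_imp.
    apply: star_trans (@qcnd_compose _ _ F [::] e _ _ q1 [::] Hbc) _.
    by apply: star_step HQ; apply: qs_condtrue; apply/(not_false Gc).
  + case: (cond_wn He Hcc Hwc) => Bc Hbc.
    have Gc := CR_good Hbc He Hcc Hwc.
    have Hq0 : star qst (QSt F [::] [:: QEv e (QImp c q1)])
                        (QSt F [::] [:: QCnd e [:: Res Bc] q1]).
      by apply: star_step; [apply: qs_imp| apply: qcnd_compose Hbc].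
    case: (Hdich Gc.1 Gc.2) => HBc.
      case: C1 => Out HQ; exists Out; apply: star_trans Hq0 _.
      by apply: star_step HQ; apply: qs_condtrue.
    exists [::]; apply: star_trans Hq0 _; apply: star_one; exact: qs_condfalse.
-
  case: Hw => HP Hw1.
  set tq := trans rt q1.
  have Htw := trans_wf leS_refl HE Hwrt Hw1.
  suff: forall n G, size G < n ->
    (forall Out, star qst (QSt F [::] [:: QFr G e P q1]) (QSt F Out [::]) ->
       exists B, star cst [:: ExF G e P tq] [:: Res B] /\ rel rt B Out) /\
    (forall B, star cst [:: ExF G e P tq] [:: Res B] ->
       exists Out, star qst (QSt F [::] [:: QFr G e P q1]) (QSt F Out [::]) /\ rel rt B Out) /\
    (exists Out, star qst (QSt F [::] [:: QFr G e P q1]) (QSt F Out [::])).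
    case/(_ (size F).+1 F (ltnSn _)) => A' [B' [Out C']].
    split; [|split].
    + move=> Out' HQ; case: (qfirst HQ) => // ? [/qev_inv -> HQ'].
      case: (A' _ HQ') => B [HB R]; exists B; split => //.
      by apply: star_step HB; constructor.
    + move=> B HC; case: (cfirst HC) => // ? [/cev_inv -> HC'].
      case: (B' _ HC') => Out' [HQ R]; exists Out'; split => //.
      by apply: star_step HQ; apply: qs_from.
    + by exists Out; apply: star_step C'; apply: qs_from.
  elim=> // n IHn G HG.
  have Hext : forall H b, matches D G e P H b ->
      let e' := e ++ zip (newvars e P) b in
      let G' := H ++ map (substL e') (pbang P) in
      size G' < n /\ genv e' /\ closedQ (map fst e') q1.
    move=> H b Hm e' G'; have [Hb Hwb _] := Hm.
    case: (env_ext He Hb Hwb) => He' Hsub.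
    split; last by split => //; apply: closedQ_mono Hsub Hc.
    exact: leq_trans (match_size HP.1 Hm) HG.
  split; [|split].
  + move=> Out HQ; case: (qfirst HQ) => // ? [/qfr_inv [[H [b [Hm ->]]]|[Hnm ->]] HQ'].
      case: (Hext H b Hm) => /= Hlt [He' Hc'].
      case: (IHn _ Hlt) => An [_ _].
      case: (IH _ He' Hc' Hw1) => Aq [_ _].
      case: (QR_split HQ') => O1 [O2 [-> [HQ1 HQ2]]].
      case: (Aq _ HQ1) => b1 [Hb1 R1]; case: (An _ HQ2) => b2 [Hb2 R2].
      have Hr := cstar_app [:: ExF (H ++ map (substL (e ++ zip (newvars e P) b)) (pbang P)) e P tq] Hb1.
      case: R1 => [[T1 M1]|[F1 M1]].
        exists bT; split.
          apply: star_step; first by apply: cs_exmatch Hm.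
          by apply: star_trans Hr _; apply: star_one; apply: cs_extrue.
        by left; split => //; apply/memD_cat; left.
      exists b2; split.
        apply: star_step; first by apply: cs_exmatch Hm.
        by apply: star_trans Hr _; apply: star_step Hb2; apply: cs_exfalse.
      case: R2 => [[T2 M2]|[F2 M2]]; [left|right]; split => //; rewrite memD_cat; tauto.
    move/qstar_nil: HQ' => <-; exists bF; split; last by rewrite /rel; right; split => //; apply: Dref.
    by apply: star_one; constructor.
  + move=> B HC; case: (cfirst HC) => // ? [/cex_inv [[H [b [Hm ->]]]|[Hnm ->]] HC'].
      case: (Hext H b Hm) => /= Hlt [He' Hc'].
      case: (IHn _ Hlt) => _ [Bn [O2' Cn]].
      case: (IH _ He' Hc' Hw1) => _ [Bq _].
      case: (@cstar_decomp _ _ F [:: Ev (e ++ zip (newvars e P) b) tq] _ B HC' (@cons_nn _ _ _))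
        => b1 [Hb1 Hr].
      case: (Bq _ Hb1) => O1 [HQ1 R1].
      case: (cfirst Hr) => // y' [/cresEx_inv [[T1 ->]|[F1 ->]] Hr'].
        move/cstar_res: Hr' => <-.
        exists (O1 ++ O2'); split.
          by apply: star_step; [apply: qs_frommatch Hm| apply: QR_cat HQ1 Cn].
        by left; split => //; apply/memD_cat; left; apply: rel_true_mem R1 T1.
      case: (Bn _ Hr') => O2 [HQ2 R2].
      exists (O1 ++ O2); split.
        by apply: star_step; [apply: qs_frommatch Hm| apply: QR_cat HQ1 HQ2].
      have M1 := rel_false_mem R1 F1.
      case: R2 => [[T2 M2]|[F2 M2]]; [left|right]; split => //; rewrite memD_cat; tauto.
    move/cstar_res: HC' => <-; exists [::]; split; last by rewrite /rel; right; split => //; apply: Dref.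
    by apply: star_one; apply: qs_fromnone.
  + case: (Classical_Prop.classic (exists H b, matches D G e P H b)) => [[H [b Hm]]|Hnm].
      case: (Hext H b Hm) => /= Hlt [He' Hc'].
      case: (IHn _ Hlt) => _ [_ [O2 Cn]].
      case: (IH _ He' Hc' Hw1) => _ [_ [O1 HQ1]].
      exists (O1 ++ O2).
      by apply: star_step; [apply: qs_frommatch Hm| apply: QR_cat HQ1 Cn].
    exists [::]; apply: star_one; apply: qs_fromnone => H b Hm; apply: Hnm; eauto.
Qed.


Lemma meq_refl L : meq D L L.
Proof. by elim: L => [|y L IH]; [constructor| apply: (@meq_cons _ _ y L [::] L y)]. Qed.

Lemma memD_meq t L : memD D t L -> exists F', meq D L (F' ++ [:: t]).
Proof.
elim: L => //= y L IH [Hty|Hm].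
  exists L; apply: (@meq_cons _ _ y L L [::] t); first exact: Dsym.
  by rewrite cats0; apply: meq_refl.
case: (IH Hm) => F' HF'; exists (y :: F').
by apply: (@meq_cons _ _ y L [::] (F' ++ [:: t]) y).
Qed.

Lemma memD_cons_cat t G1 y G2 : memD D t (G1 ++ y :: G2) <-> D t y \/ memD D t (G1 ++ G2).
Proof. rewrite !memD_cat /=; tauto. Qed.

Lemma meq_memD t L M : meq D L M -> memD D t L -> memD D t M.
Proof.
elim=> //= x L' G1 G2 y Hxy _ IH [Htx|Hm]; apply/memD_cons_cat.
  by left; apply: Dtr Htx Hxy.
by right; apply: IH.
Qed.

Lemma meq_memD' t L M : meq D L M -> memD D t M -> memD D t L.
Proof.
elim=> //= x L' G1 G2 y Hxy _ IH /memD_cons_cat [Hty|Hm].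
  by left; apply: Dtr Hty (Dsym Hxy).
by right; apply: IH.
Qed.

Lemma csat_star st B : star (cstepS D) (CSt F st) (Sat B) -> star cst st [:: Res B].
Proof.
have Hgen : forall x z, star (cstepS D) x z -> forall st, x = CSt F st -> z = Sat B ->
   star cst st [:: Res B].
  move=> x z; elim=> [x0|x0 y z0 Hxy Hyz IH] st0 Ex Ez; subst => //.
  inversion Hxy; subst.
    by apply: star_step (IH _ erefl erefl).
  case: (star_first Hyz) => [[->]|[w [Hw _]]]; first exact: star_refl.
  by inversion Hw.
by move=> H; apply: (Hgen _ _ H _ erefl erefl).
Qed.

Lemma star_csat st B : star cst st [:: Res B] -> reach_nf (cstepS D) (CSt F st) (Sat B).
Proof.
move=> H; split; last by move=> z Hz; inversion Hz.
have Hgen : forall st z, star cst st z -> z = [:: Res B] -> star (cstepS D) (CSt F st) (Sat B).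
  move=> st0 z; elim=> [x ->|x y z' Hxy _ IH Ez]; first by apply: star_one; constructor.
  by apply: star_step (IH Ez); constructor.
exact: Hgen H erefl.
Qed.

Lemma qans_iff s Out : reach_nf (qstepS D) (QSt F [::] s) (Ans Out) <->
  star qst (QSt F [::] s) (QSt F Out [::]).
Proof.
split; first by case=> H _; apply: qstar_toAns.
move=> H; split; last by move=> z Hz; inversion Hz.
by apply: star_trans H _; apply: star_one; constructor.
Qed.

Lemma final Q' : wfQ Q' -> closedQ [::] Q' ->
  ((exists B, reach_nf (cstepS D) (initC F (trans rt Q')) (Sat B) /\ D B bT) <->
   (exists F' Ans', reach_nf (qstepS D) (initQ F Q') (Ans Ans') /\ meq D Ans' (F' ++ [:: rt]))) /\
  ((exists B, reach_nf (cstepS D) (initC F (trans rt Q')) (Sat B) /\ D B bF) <->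
   (exists F' Ans', ~ memD D rt F' /\ reach_nf (qstepS D) (initQ F Q') (Ans Ans') /\ meq D Ans' F')).
Proof.
move=> Hw Hc; case: (@main Q' [::] I Hc Hw) => HA [HB _].
rewrite /initC /initQ; split; split.
- case=> B [[/csat_star H _] T]; case: (HB _ H) => Out [HQ R].
  case: (memD_meq (rel_true_mem R T)) => F' HF'.
  by exists F', Out; split => //; apply/qans_iff.
- case=> F' [Out [/qans_iff HQ HM]]; case: (HA _ HQ) => B [HC R].
  exists B; split; first exact: star_csat.
  case: R => [[//]|[_ NM]]; exfalso; apply: NM; apply: (meq_memD' HM).
  by apply/memD_cat; right; left; apply: Dref.
- case=> B [[/csat_star H _] Fb]; case: (HB _ H) => Out [HQ R].
  exists Out, Out; split; first exact: (rel_false_mem R Fb).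
  by split; [apply/qans_iff| apply: meq_refl].
- case=> F' [Out [NM [/qans_iff HQ HM]]]; case: (HA _ HQ) => B [HC R].
  exists B; split; first exact: star_csat.
  case: R => [[_ M]|[//]]; exfalso; apply: NM; exact: meq_memD HM M.
Qed.

End Main.

Lemma gr_allP (S : sig) (ts : seq (term S)) : gr_list ts -> allP (@ground S) ts.
Proof. by elim: ts => //= u us IH [G1 G2]; split; auto. Qed.

Theorem lemma13 (S : sig) (D A : term S -> term S -> Prop) (nf : term S -> term S)
  (HD : fact_algebra D A nf)
  (r : opsym S) (Q : query S) (x : seq (var S))
  (Hr : fcod r = sFact S)
  (Hx : uniq x) (Hxs : map (@vsort S) x = fdom r)
  (HQ : wfQ Q)
  (Hdisj : forall y, y \in x -> y \notin qvars Q) :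
  exists phi : cond S,
    (forall (F : seq (term S)) (t a : seq (term S)) (v : seq (var S)),
       foldr (fun f P => ground f /\ wt f (sFact S) /\ P) True F ->
       uniq (x ++ v) ->
       gr_list t -> wts t (fdom r) ->
       gr_list a -> wts a (map (@vsort S) v) ->
       closedQ [::] (substQ (zip v a) Q) ->
       closedC [::] (substC (zip x t ++ zip v a) phi) /\
       ((exists B, reach_nf (cstepS D) (initC F (substC (zip x t ++ zip v a) phi)) (Sat B)
                   /\ D B (bTrue S)) <->
        (exists F' Ans', reach_nf (qstepS D) (initQ F (substQ (zip v a) Q)) (Ans Ans')
                   /\ meq D Ans' (F' ++ [:: TApp r t]))) /\
       ((exists B, reach_nf (cstepS D) (initC F (substC (zip x t ++ zip v a) phi)) (Sat B)
                   /\ D B (bFalse S)) <->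
        (exists F' Ans', ~ memD D (TApp r t) F'
                   /\ reach_nf (qstepS D) (initQ F (substQ (zip v a) Q)) (Ans Ans')
                   /\ meq D Ans' F')))
    /\ (detQ A nf Q -> detC A nf phi).
Proof.
case: HD => [[Lr [Lt _]] [[HT HF] HN _ _ HEs] [[Dr [Ds Dt]] _ _ _ _] _ [[Hdi Htf] Hno _ _ Heqs]].
exists (trans (TApp r (map (@TVar S) x)) Q); split; last exact: trans_det.
move=> F t a v _ Huxv Hgt Hwt Hga Hwa HcQ.
have Hsz : size x = size t.
  by rewrite (size_wts Hwt) -Hxs size_map.
have Hdx : forall y, y \in qvars Q -> y \notin x.
  by move=> y Hy; apply/negP => /Hdisj; rewrite Hy.
rewrite subst_trans //.
have Hrt : ground (TApp r t) by apply: ground_app; apply: gr_allP.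
have Hwrt : wt (TApp r t) (sFact S) by apply: wt_app Hwt _; rewrite Hr.
have Hge : genv (zip v a) by apply: genv_zip.
have HwQ := wfQ_subst Lr Lt Hge HQ.
split; first exact: trans_closed Hrt HcQ.
exact: (final F Dr Ds Dt Htf Hdi Hno Heqs Lr Lt HT HF HN (HEs (sFact S)) Hrt Hwrt HwQ HcQ).
Qed.
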